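(* Suppose $F$ satisfies Assumption A1, $F\in MDA(\Lambda)$ (i.e. $\xi=0$), Assumption A3, and $x_F<\infty$. Let $Y=1/(x_F-X)$ with distribution function $F_Y$, $\bar F_Y=1-F_Y$, and density $f_Y$. Then there exists $z_Y<\infty$ such that on $(z_Y,\infty)$, $F_Y$ is twice differentiable and $f_Y$ is positive, decreasing and convex. Moreover, $F_Y\in MDA(\Lambda)$ with infinite right endpoint, and $$\lim_{x\to\infty}\frac{\bar F_Y(x)f_Y'(x)}{f_Y(x)^2}=-1.$$
   Context: $X$ is a continuous random variable with distribution function $F$, density $f$, $\bar F=1-F$, and right endpoint $x_F=\sup\{x:F(x)<1\}$. For $\xi\in\mathbb{R}$, $H_\xi(x)=\exp\{-(1+\xi x)^{-1/\xi}\}$ if $\xi\ne0$ and $H_0(x)=\Lambda(x)=\exp\{-e^{-x}\}$, for $1+\xi x>0$. $F\in MDA(H_\xi)$ means there exist $c_n>0$, $d_n\in\mathbb{R}$ with $c_n^{-1}(M_n-d_n)$ converging in distribution to $H_\xi$, $M_n$ the maximum of $n$ i.i.d. copies of $X$. Assumption A1: there exists $z<x_F$ such that on $(z,x_F)$, $F$ is twice differentiable and $f$ is positive, decreasing and convex. Assumption A3: $\lim_{x\uparrow x_F}\bar F(x)f'(x)/f(x)^2=-1$. *)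

(* Defs.v *)
From HB Require Import structures.
From mathcomp Require Import all_boot all_order all_algebra.
From mathcomp Require Import all_classical all_reals all_analysis.
Set Implicit Arguments. Unset Strict Implicit. Unset Printing Implicit Defensive.
Import Order.TTheory GRing.Theory Num.Theory.
Import numFieldNormedType.Exports.
Local Open Scope classical_set_scope.
Local Open Scope ring_scope.

Definition distF d (T : measurableType d) (R : realType) (P : probability T R)
  (X : {RV P >-> R}) (x : R) : R := fine (cdf X x).

Definition has_density d (T : measurableType d) (R : realType)
  (P : probability T R) (X : {RV P >-> R}) : Prop :=
  exists f : R -> R, (forall x, 0 <= f x) /\ measurable_fun setT f /\
    forall r, cdf X r = (\int[lebesgue_measure]_(t in `]-oo, r]) (f t)%:E)%E.

(* Right endpoint x_F = sup {x : F x < 1}; finiteness = this set is bounded above. *)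
Definition endpoint_set (R : realType) (F : R -> R) : set R := [set x | F x < 1].

(* "decreasing" on an interval, read as non-increasing. *)
Definition decreasing_on (R : realType) (I : set R) (g : R -> R) : Prop :=
  forall x y, I x -> I y -> x <= y -> g y <= g x.

Definition convex_on (R : realType) (I : set R) (g : R -> R) : Prop :=
  forall x y t, I x -> I y -> 0 <= t <= 1 ->
    g (t * x + (1 - t) * y) <= t * g x + (1 - t) * g y.

Definition tail_regular (R : realType) (I : set R) (F : R -> R) : Prop :=
  (forall x, I x -> derivable F x 1 /\ derivable (derive1 F) x 1) /\
  (forall x, I x -> 0 < (derive1 F) x) /\
  decreasing_on I (derive1 F) /\ convex_on I (derive1 F).

Definition Gumbel (R : realType) (x : R) : R := expR (- expR (- x)).

(* F in MDA(Lambda): there exist c_n > 0, d_n with c_n^{-1}(M_n - d_n) => Lambda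
   in distribution, where M_n is the maximum of n i.i.d. copies, whose
   distribution function is F^n; Lambda being continuous, convergence in
   distribution means pointwise convergence of distribution functions. *)
Definition MDA_Gumbel (R : realType) (F : R -> R) : Prop :=
  exists c d : nat -> R, (forall n, 0 < c n) /\
    forall x : R, (fun n => F (c n * x + d n) ^+ n) @ \oo --> Gumbel x.

(* Main.v *)
Require Import Defs.
From HB Require Import structures.
From mathcomp Require Import all_boot all_order all_algebra.
From mathcomp Require Import all_classical all_reals all_analysis.
From mathcomp Require Import ring lra.
Import Order.TTheory GRing.Theory Num.Theory.
Import numFieldNormedType.Exports.
Local Open Scope classical_set_scope.
Local Open Scope ring_scope.
Set Implicit Arguments. Unset Strict Implicit. Unset Printing Implicit Defensive.
Lemma left_lim_eps (R : realType) (g : R -> R) (a l : R) :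
  g @ a^'- --> l -> forall e, 0 < e -> exists2 d, 0 < d &
    forall x, a - d < x -> x < a -> `|g x - l| < e.
Proof.
move=> /cvgrPdist_lt H e e0.
have := H e e0. rewrite near_withinE => /nbhs_ballP [d /= d0 Hd].
exists d => // x h1 h2. rewrite distrC. apply: (Hd x) => //.
rewrite /ball /= ltr_distlC; apply/andP; split => //. lra.
Qed.

Lemma pinfty_lim_eps (R : realType) (h : R -> R) (l : R) :
  (forall e, 0 < e -> exists M, forall y, M < y -> `|h y - l| < e) -> h @ +oo --> l.
Proof.
move=> H; apply/cvgrPdist_lt => e e0.
have [M HM] := H e e0. exists M; split; first exact: num_real.
by move=> y My; rewrite distrC; apply: HM.
Qed.

Lemma seq_lim_eps (R : realType) (u : nat -> R) (l : R) :
  u @ \oo --> l <-> (forall e, 0 < e -> exists N, forall n, (N <= n)%N -> `|u n - l| < e).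
Proof.
split.
- move=> /cvgrPdist_lt H e e0. have [N _ HN] := H e e0.
  by exists N => n Nn; rewrite distrC; apply: HN.
- move=> H; apply/cvgrPdist_lt => e e0. have [N HN] := H e e0.
  exists N => // n Nn; rewrite distrC; exact: HN.
Qed.
Lemma mvt_cc (R : realType) (h dh : R -> R) (a b : R) : a <= b ->
  (forall y, a <= y <= b -> is_derive y 1 h (dh y)) ->
  exists2 c, a <= c <= b & h b - h a = dh c * (b - a).
Proof.
move=> ab H.
have H1 : forall x, x \in `]a, b[%R -> is_derive x 1 h (dh x).
  by move=> y; rewrite in_itv /= => /andP[ay yb]; apply: H; rewrite !ltW.
have H2 : {within `[a, b], continuous h}.
  apply: continuous_in_subspaceT => y; rewrite inE /= in_itv /= => yab.
  have [d _] := H y yab. exact/differentiable_continuous/derivable1_diffP.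
have [c cab ->] := MVT_segment ab H1 H2.
by exists c => //; move: cab; rewrite in_itv.
Qed.

Lemma is_derive_a (R : realType) (F f f' : R -> R) (x : R) :
  is_derive x (1:R) F (f x) -> is_derive x (1:R) f (f' x) -> f x != 0 ->
  is_derive x 1 (fun t => (1 - F t) * (f t)^-1)
     (- 1 - (1 - F x) * f' x / (f x) ^+ 2).
Proof.
move=> dF df fx0.
have h1 : is_derive x 1 (fun t => 1 - F t) (- f x).
  have := @is_deriveB R R R (cst 1) F x 1 0 (f x) _ dF.
  rewrite sub0r; exact.
have h2 := is_deriveV fx0 df.
have := is_deriveM h1 h2.
move=> H; apply: (is_derive_eq H). rewrite /=.
rewrite /GRing.scale /=. field. exact: fx0.
Qed.

Lemma is_derive_psi (R : realType) (F f : R -> R) (k x : R) :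
  is_derive x (1:R) F (f x) ->
  is_derive x 1 (fun t => (1 - F t) * expR (k * t))
     (expR (k * x) * ((1 - F x) * k - f x)).
Proof.
move=> dF.
have h1 : is_derive x 1 (fun t => 1 - F t) (- f x).
  have := @is_deriveB R R R (cst 1) F x 1 0 (f x) _ dF.
  rewrite sub0r; exact.
have h3 : is_derive x (1:R) (fun t => k * t) k.
  have := @is_deriveZ R R R id k x 1 1 _. rewrite /GRing.scale /= mulr1. exact.
have h2 : is_derive x (1:R) (expR \o (fun t => k * t)) (expR (k * x) * k).
  exact: is_derive1_comp.
have := is_deriveM h1 h2.
move=> H; apply: (is_derive_eq H). rewrite /GRing.scale /=. ring.
Qed.

Lemma key_a (R : realType) (F f f' : R -> R) (xF z : R) :
  z < xF ->
  (forall x, z < x < xF -> is_derive x (1:R) F (f x)) ->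
  (forall x, z < x < xF -> is_derive x (1:R) f (f' x)) ->
  (forall x, z < x < xF -> 0 < f x) ->
  (forall x, x < xF -> F x < 1) ->
  (forall x y, x <= y -> F x <= F y) ->
  (forall η, 0 < η -> exists2 s, s < xF & 1 - η < F s) ->
  (forall ε, 0 < ε -> exists2 d, 0 < d & forall x, xF - d < x -> x < xF ->
      `|(1 - F x) * f' x / (f x)^+2 - (-1)| < ε) ->
  forall e, 0 < e -> exists2 d, 0 < d & forall x, xF - d < x -> x < xF ->
      (1 - F x) / f x <= e * (xF - x).
Proof.
move=> hz dF df fpos Flt Fmono Fsup A3 e e0.
have eps0 : 0 < e / 4 by rewrite divr_gt0.
have [d1 d10 Hd1] := A3 _ eps0.
exists (Num.min d1 (xF - z)); first by rewrite lt_min d10 subr_gt0 hz.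
move=> x hx1 hx2.
have m1 : Num.min d1 (xF - z) <= d1 by rewrite ge_min lexx.
have m2 : Num.min d1 (xF - z) <= xF - z by rewrite ge_min lexx orbT.
have hxd1 : xF - d1 < x by lra.
have hxz : z < x by lra.
rewrite leNgt; apply/negP => Hc.
set a := fun t => (1 - F t) * (f t)^-1.
have ax : a x = (1 - F x) / f x by [].
have fx0 := fpos x (andb_true_intro (conj hxz hx2)).
have u0 : 0 < xF - x by rewrite subr_gt0.
have eu0 : 0 < e * (xF - x) by rewrite mulr_gt0.
set c := a x / 2.
have c0 : 0 < c by rewrite divr_gt0 //; apply: lt_trans Hc.
have Ha : forall t, x <= t < xF -> c <= a t.
  move=> t /andP[xt txF].
  have HD : forall y, x <= y <= t ->
      is_derive y 1 a (- 1 - (1 - F y) * f' y / (f y) ^+ 2).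
    move=> y /andP[xy yt].
    have yI : z < y < xF by apply/andP; split; [exact: (lt_le_trans hxz xy)| exact: (le_lt_trans yt txF)].
    apply: is_derive_a; [exact: dF yI| exact: df yI| by rewrite gt_eqF // fpos].
  have [y /andP[xy yt] Heq] := mvt_cc xt HD.
  have hy1 : xF - d1 < y by apply: lt_le_trans xy.
  have hy2 : y < xF by apply: le_lt_trans txF.
  have := Hd1 y hy1 hy2.
  set D := (1 - F y) * f' y / f y ^+ 2.
  rewrite opprK ltr_norml => /andP[D1 D2].
  have h1 : 0 <= (-1 - D + e / 4) by lra.
  have h2 : 0 <= t - x by rewrite subr_ge0.
  have h3 : 0 <= (-1 - D + e / 4) * (t - x) by apply: mulr_ge0.
  have h4 : 0 <= e * ((xF - x) - (t - x)) by apply: mulr_ge0; lra.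
  move: Heq Hc; rewrite /c => Heq Hc.
  have : a t - a x >= - (e/4) * (xF - x).
    rewrite Heq. move: h3 h4. set T := t - x. set U := xF - x. set DD := -1 - D.
    move=> h3 h4. nra.
  lra.
set k := c^-1.
have k0 : 0 < k by rewrite invr_gt0.
set psi := fun t => (1 - F t) * expR (k * t).
have Hpsi : forall t, x <= t < xF -> psi x <= psi t.
  move=> t /andP[xt txF].
  have HD : forall y, x <= y <= t ->
      is_derive y 1 psi (expR (k * y) * ((1 - F y) * k - f y)).
    move=> y /andP[xy yt].
    have yI : z < y < xF by apply/andP; split; [exact: (lt_le_trans hxz xy)| exact: (le_lt_trans yt txF)].
    exact/is_derive_psi/dF.
  have [y /andP[xy yt] Heq] := mvt_cc xt HD.
  rewrite -subr_ge0 Heq; apply: mulr_ge0; last by rewrite subr_ge0.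
  apply: mulr_ge0; first exact: expR_ge0.
  have yI : z < y < xF by apply/andP; split; [exact: (lt_le_trans hxz xy)| exact: (le_lt_trans yt txF)].
  have fy0 := fpos y yI.
  have := Ha y (andb_true_intro (conj xy (le_lt_trans yt txF))).
  rewrite /a /k => H.
  rewrite subr_ge0.
  have H' := ler_wpM2r (ltW fy0) H. rewrite mulfVK ?gt_eqF // in H'.
  by rewrite ler_pdivlMr // mulrC.
set eta := psi x / expR (k * xF).
have Fx1 : 0 < 1 - F x by rewrite subr_gt0 Flt.
have eta0 : 0 < eta by rewrite divr_gt0 ?expR_gt0 // mulr_gt0 // expR_gt0.
have [s sxF Hs] := Fsup _ eta0.
set t := Num.max s x.
have ht : x <= t < xF by rewrite le_max lexx orbT /= gt_max sxF hx2.
have Fst : F s <= F t by apply: Fmono; rewrite le_max lexx.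
have := Hpsi t ht.
rewrite /psi.
have Et : expR (k * t) <= expR (k * xF).
  by rewrite ler_expR ler_pM2l //; case/andP: ht => _ /ltW.
have E0 := expR_gt0 (k * t).
move: Hs; rewrite /eta /psi => Hs H.
have : (1 - F x) * expR (k * x) <= (1 - F t) * expR (k * xF).
  apply: le_trans H _; apply: ler_wpM2l => //; rewrite subr_ge0; apply: ltW.
  by apply: Flt; case/andP: ht.
rewrite -ler_pdivrMr ?expR_gt0 //. lra.
Qed.

Lemma is_derive_g (R : realType) (xF y : R) : y != 0 ->
  is_derive y (1:R) (fun t => xF - t^-1) ((y^-1)^+2).
Proof.
move=> y0.
have h := @is_deriveV R id y 1 1 y0 (is_derive_id y 1).
have := @is_deriveB R R R (cst xF) (fun t => (id t)^-1) y 1 0 _ (is_derive_cst xF y 1) h.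
move=> H; apply: (is_derive_eq H). rewrite /GRing.scale /= expr2 exprVn expr2. ring.
Qed.

Lemma is_derive_fY (R : realType) (f : R -> R) (df xF y : R) : y != 0 ->
  is_derive (xF - y^-1) (1:R) f df ->
  is_derive y (1:R) (fun t => f (xF - t^-1) * (t^-1)^+2)
     (df * (y^-1)^+4 - 2 * f (xF - y^-1) * (y^-1)^+3).
Proof.
move=> y0 hf.
have h1 : is_derive y (1:R) (f \o (fun t => xF - t^-1)) (df * (y^-1)^+2).
  apply: is_derive1_comp => //; exact: is_derive_g.
have hv := @is_deriveV R id y 1 1 y0 (is_derive_id y 1).
have h2 := @is_deriveX R R (fun t => (id t)^-1) 2 y 1 _ hv.
have e : (fun t : R => (id t)^-1) ^+ 2 = (fun t => (t^-1)^+2).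
  by apply/funext => t; rewrite exprfctE.
rewrite e in h2.
have := is_deriveM h1 h2.
move=> H; apply: (is_derive_eq H). rewrite /GRing.scale /=.
rewrite !exprVn. field. exact: y0.
Qed.

Lemma transfer (R : realType) (F f f' H : R -> R) (xF z y : R) :
  z < xF -> (forall t, 0 < t -> H t = F (xF - t^-1)) ->
  (forall x, z < x < xF -> is_derive x (1:R) F (f x)) ->
  (forall x, z < x < xF -> is_derive x (1:R) f (f' x)) ->
  (xF - z)^-1 < y ->
  [/\ derivable H y 1, derive1 H y = f (xF - y^-1) * (y^-1)^+2,
      derivable (derive1 H) y 1 &
      derive1 (derive1 H) y = f' (xF - y^-1) * (y^-1)^+4 - 2 * f (xF - y^-1) * (y^-1)^+3].
Proof.
move=> hz HH dF df.
have a00 : 0 < (xF - z)^-1 by rewrite invr_gt0 subr_gt0.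
have Hpt : forall t, (xF - z)^-1 < t ->
   [/\ 0 < t, t != 0 & z < xF - t^-1 < xF].
  move=> t ht. have t0 : 0 < t by apply: lt_trans ht.
  split => //; first by rewrite gt_eqF.
  apply/andP; split; last by rewrite ltrBlDr ltrDl invr_gt0.
  have : t^-1 < xF - z.
    by rewrite -[xF - z]invrK ltf_pV2 // ?posrE // invr_gt0 subr_gt0.
  lra.
have D1 : forall t, (xF - z)^-1 < t ->
    is_derive t (1:R) H (f (xF - t^-1) * (t^-1)^+2).
  move=> t ht. have [t0 tn0 tI] := Hpt t ht.
  apply: (@near_eq_is_derive _ _ _ (F \o (fun s => xF - s^-1))).
    near=> s. rewrite /= HH //. near: s. exact: lt_nbhsr.
  apply: is_derive1_comp; first exact: dF. exact: is_derive_g.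
have D1e : forall t, (xF - z)^-1 < t -> derive1 H t = f (xF - t^-1) * (t^-1)^+2.
  by move=> t /D1 ht; rewrite derive1E derive_val.
move=> hy. have [y0 yn0 yI] := Hpt y hy.
have D2 : is_derive y (1:R) (derive1 H)
    (f' (xF - y^-1) * (y^-1)^+4 - 2 * f (xF - y^-1) * (y^-1)^+3).
  have hfy := is_derive_fY yn0 (df _ yI).
  have hn : \near y, (fun t => f (xF - t^-1) * (t^-1)^+2) y = derive1 H y.
    near=> s. rewrite D1e //. near: s. exact: lt_nbhsr.
  exact: (near_eq_is_derive hn hfy).
split.
- by case: (D1 y hy).
- exact: D1e.
- by case: D2.
- by rewrite derive1E derive_val.
Unshelve. all: by end_near.
Qed.

Lemma inv_convex (R : realType) (x y t : R) : 0 < x -> 0 < y -> 0 <= t <= 1 ->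
  (t * x + (1 - t) * y)^-1 <= t * x^-1 + (1 - t) * y^-1.
Proof.
move=> x0 y0 /andP[t0 t1].
have w0 : 0 < t * x + (1 - t) * y.
  have [->|tn0] := eqVneq t 0; first by rewrite mul0r add0r subr0 mul1r.
  have tp : 0 < t by rewrite lt_def tn0 t0.
  apply: ltr_pwDl; first by rewrite mulr_gt0.
  by rewrite mulr_ge0 // ?subr_ge0 // ltW.
rewrite -subr_ge0.
have -> : t * x^-1 + (1 - t) * y^-1 - (t * x + (1 - t) * y)^-1 =
   t * (1 - t) * (x - y)^+2 / (x * y * (t * x + (1 - t) * y)).
  by field; rewrite !gt_eqF.
apply: divr_ge0.
  by apply: mulr_ge0; [apply: mulr_ge0; rewrite // subr_ge0 | exact: sqr_ge0].
by apply: ltW; rewrite !mulr_gt0.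
Qed.

Lemma sq_convex (R : realType) (a b t : R) : 0 <= t <= 1 ->
  (t * a + (1 - t) * b)^+2 <= t * a^+2 + (1 - t) * b^+2.
Proof.
move=> /andP[t0 t1]. rewrite -subr_ge0.
have -> : t * a^+2 + (1 - t) * b^+2 - (t * a + (1 - t) * b)^+2 = t * (1 - t) * (a - b)^+2.
  by ring.
by apply: mulr_ge0; [apply: mulr_ge0; rewrite // subr_ge0 | exact: sqr_ge0].
Qed.

Lemma prod_convex_pt (R : realType) (px py qx qy pw qw t : R) :
  0 <= t <= 1 -> 0 <= pw -> 0 <= qw ->
  pw <= t * px + (1 - t) * py -> qw <= t * qx + (1 - t) * qy ->
  0 <= (px - py) * (qx - qy) ->
  pw * qw <= t * (px * qx) + (1 - t) * (py * qy).
Proof.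
move=> /andP[t0 t1] pw0 qw0 hp hq hs.
apply: (le_trans (ler_pM pw0 qw0 hp hq)).
rewrite -subr_ge0.
have -> : t * (px * qx) + (1 - t) * (py * qy) - (t * px + (1 - t) * py) * (t * qx + (1 - t) * qy)
   = t * (1 - t) * ((px - py) * (qx - qy)) by ring.
by apply: mulr_ge0 => //; apply: mulr_ge0; rewrite // subr_ge0.
Qed.

Lemma inv_sq_le (R : realType) (x y : R) : 0 < x -> x <= y -> (y^-1)^+2 <= (x^-1)^+2.
Proof.
move=> x0 xy. have y0 : 0 < y by apply: lt_le_trans xy.
have h : y^-1 <= x^-1 by rewrite lef_pV2 ?posrE.
by rewrite !expr2; apply: ler_pM => //; rewrite invr_ge0 ltW.
Qed.

Lemma tailY (R : realType) (F H : R -> R) (xF z : R) : z < xF ->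
  (forall t, 0 < t -> H t = F (xF - t^-1)) ->
  tail_regular `]z, xF[ F -> tail_regular `](xF - z)^-1, +oo[ H.
Proof.
move=> hz HH [Hd [Hpos [Hdec Hconv]]].
have dF : forall x, z < x < xF -> is_derive x (1:R) F (derive1 F x).
  move=> x xI; have [h _] := Hd x (xI : `]z, xF[%classic x).
  by rewrite derive1E; apply: derivableP.
have df : forall x, z < x < xF -> is_derive x (1:R) (derive1 F) (derive1 (derive1 F) x).
  move=> x xI; have [_ h] := Hd x (xI : `]z, xF[%classic x).
  by rewrite [X in is_derive _ _ _ X]derive1E; apply: derivableP.
have a00 : 0 < (xF - z)^-1 by rewrite invr_gt0 subr_gt0.
have Hpt : forall t, (xF - z)^-1 < t -> [/\ 0 < t & z < xF - t^-1 < xF].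
  move=> t ht. have t0 : 0 < t by apply: lt_trans ht.
  split => //.
  apply/andP; split; last by rewrite ltrBlDr ltrDl invr_gt0.
  have : t^-1 < xF - z.
    by rewrite -[xF - z]invrK ltf_pV2 // ?posrE // invr_gt0 subr_gt0.
  lra.
have itv1 : forall t, `](xF - z)^-1, +oo[%classic t -> (xF - z)^-1 < t.
  by move=> t; rewrite /= in_itv /= andbT.
have itv2 : forall x, z < x < xF -> `]z, xF[%classic x by move=> x; rewrite /= in_itv /=.
have dH : forall t, (xF - z)^-1 < t -> derive1 H t = derive1 F (xF - t^-1) * (t^-1)^+2.
  by move=> t ht; case: (transfer hz HH dF df ht).
split; [|split; [|split]].
- by move=> t /itv1 ht; case: (transfer hz HH dF df ht).
- move=> t /itv1 ht; rewrite dH //; have [t0 tI] := Hpt t ht.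
  by rewrite mulr_gt0 ?exprn_gt0 ?invr_gt0 // Hpos // itv2.
- move=> x y /itv1 hx /itv1 hy xy; rewrite !dH //.
  have [x0 xI] := Hpt x hx; have [y0 yI] := Hpt y hy.
  apply: ler_pM.
  + by apply: ltW; apply: Hpos; apply: itv2.
  + by rewrite exprn_ge0 // invr_ge0 ltW.
  + apply: Hdec; try exact: itv2.
    by rewrite lerD2l lerN2 lef_pV2 ?posrE.
  + exact: inv_sq_le.
- move=> x y t /itv1 hx /itv1 hy ht.
  have [x0 xI] := Hpt x hx; have [y0 yI] := Hpt y hy.
  case/andP: (ht) => t0 t1.
  set w := t * x + (1 - t) * y.
  have hw : (xF - z)^-1 < w.
    have [te|tn0] := eqVneq t 0; first by rewrite /w te mul0r add0r subr0 mul1r.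
    have tp : 0 < t by rewrite lt_def tn0 t0.
    have : t * (xF - z)^-1 + (1 - t) * (xF - z)^-1 = (xF - z)^-1 by ring.
    have : t * (xF - z)^-1 < t * x by rewrite ltr_pM2l.
    have : (1 - t) * (xF - z)^-1 <= (1 - t) * y by rewrite ler_wpM2l ?subr_ge0 // ltW.
    rewrite /w; lra.
  have [w0 wI] := Hpt w hw.
  rewrite !dH //.
  set gx := xF - x^-1; set gy := xF - y^-1.
  have cI : `]z, xF[%classic (t * gx + (1 - t) * gy).
    apply: itv2; case/andP: xI => xI1 xI2; case/andP: yI => yI1 yI2.
    have : t * z + (1 - t) * z = z by ring.
    have : t * xF + (1 - t) * xF = xF by ring.
    have : t * z <= t * gx by rewrite ler_wpM2l // ltW.
    have : (1 - t) * z <= (1 - t) * gy by rewrite ler_wpM2l ?subr_ge0 // ltW.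
    have : t * gx <= t * xF by rewrite ler_wpM2l // ltW.
    have : (1 - t) * gy <= (1 - t) * xF by rewrite ler_wpM2l ?subr_ge0 // ltW.
    (* strictness: one of t, 1-t positive *)
    have [te|tn0] := eqVneq t 0.
      rewrite te !mul0r !add0r !subr0 !mul1r => *; exact/andP.
    have tp : 0 < t by rewrite lt_def tn0 t0.
    have : t * z < t * gx by rewrite ltr_pM2l.
    have : t * gx < t * xF by rewrite ltr_pM2l.
    move=> *; apply/andP; split; lra.
  apply: prod_convex_pt.
  + exact/andP.
  + by apply: ltW; apply: Hpos; apply: itv2.
  + by rewrite exprn_ge0 // invr_ge0 ltW.
  + apply: le_trans; last exact: (Hconv gx gy t (itv2 _ xI) (itv2 _ yI) ht).
    apply: Hdec; [exact: cI | exact: itv2 |].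
    rewrite /gx /gy /w.
    have := inv_convex x0 y0 ht. lra.
  + apply: le_trans; last exact: sq_convex.
    have hc := inv_convex x0 y0 ht.
    have wi0 : 0 <= w^-1 by rewrite invr_ge0 ltW.
    by rewrite !expr2; apply: ler_pM.
  + have [xy|yx] := leP x y.
    * apply: mulr_ge0; rewrite subr_ge0.
      - apply: Hdec; try exact: itv2. by rewrite /gx /gy lerD2l lerN2 lef_pV2 ?posrE.
      - exact: inv_sq_le.
    * apply: mulr_le0; rewrite subr_le0.
      - apply: Hdec; try exact: itv2. by rewrite /gx /gy lerD2l lerN2 lef_pV2 ?posrE // ltW.
      - by apply: inv_sq_le => //; apply: ltW.
Qed.

Lemma tail_derivs (R : realType) (F : R -> R) (xF z : R) :
  tail_regular `]z, xF[ F ->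
  [/\ (forall x, z < x < xF -> is_derive x (1:R) F (derive1 F x)),
      (forall x, z < x < xF -> is_derive x (1:R) (derive1 F) (derive1 (derive1 F) x)) &
      (forall x, z < x < xF -> 0 < derive1 F x)].
Proof.
move=> [Hd [Hpos _]]; split.
- move=> x xI; have [h _] := Hd x (xI : `]z, xF[%classic x).
  by rewrite derive1E; apply: derivableP.
- move=> x xI; have [_ h] := Hd x (xI : `]z, xF[%classic x).
  by rewrite [X in is_derive _ _ _ X]derive1E; apply: derivableP.
- by move=> x xI; apply: Hpos; rewrite /= in_itv /=.
Qed.

Lemma A3Y (R : realType) (F H : R -> R) (xF z : R) : z < xF ->
  (forall t, 0 < t -> H t = F (xF - t^-1)) ->
  tail_regular `]z, xF[ F ->
  (forall x, x < xF -> F x < 1) ->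
  (forall x y, x <= y -> F x <= F y) ->
  (forall η, 0 < η -> exists2 s, s < xF & 1 - η < F s) ->
  (fun x => (1 - F x) * derive1 (derive1 F) x / (derive1 F x) ^+ 2)
    @ xF^'- --> (-1 : R) ->
  (fun y => (1 - H y) * derive1 (derive1 H) y / (derive1 H y) ^+ 2)
    @ +oo --> (-1 : R).
Proof.
move=> hz HH Hreg Flt Fmono Fsup HA3.
have [dF df fpos] := tail_derivs Hreg.
have A3 := left_lim_eps HA3.
apply: pinfty_lim_eps => e e0.
have e2 : 0 < e / 2 by rewrite divr_gt0.
have e4 : 0 < e / 4 by rewrite divr_gt0.
have [d1 d10 Hd1] := A3 _ e2.
have [d2 d20 Hd2] := key_a hz dF df fpos Flt Fmono Fsup A3 e4.
have a00 : 0 < (xF - z)^-1 by rewrite invr_gt0 subr_gt0.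
exists (Num.max ((xF - z)^-1) (Num.max d1^-1 d2^-1)) => y.
rewrite !gt_max => /andP[ya /andP[y1 y2]].
have y0 : 0 < y by apply: lt_trans ya.
have [_ ->  _ ->] := transfer hz HH dF df ya.
rewrite HH //.
set x := xF - y^-1.
have u1 : y^-1 < d1 by rewrite -[d1]invrK ltf_pV2 ?posrE ?invr_gt0.
have u2 : y^-1 < d2 by rewrite -[d2]invrK ltf_pV2 ?posrE ?invr_gt0.
have hx1 : xF - d1 < x by rewrite /x; lra.
have hx2 : xF - d2 < x by rewrite /x; lra.
have hxF : x < xF by rewrite /x ltrBlDr ltrDl invr_gt0.
have xI : z < x < xF.
  apply/andP; split => //.
  have : y^-1 < xF - z.
    by rewrite -[xF - z]invrK ltf_pV2 // ?posrE // invr_gt0 subr_gt0.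
  rewrite /x; lra.
have fx0 := fpos x xI.
have Fx1 : 0 < 1 - F x by rewrite subr_gt0 Flt.
set f := derive1 F; set f' := derive1 (derive1 F).
have -> : (1 - F x) * (f' x * y^-1 ^+ 4 - 2 * f x * y^-1 ^+ 3) / (f x * y^-1 ^+ 2) ^+ 2
   = (1 - F x) * f' x / f x ^+ 2 - 2 * ((1 - F x) / f x) * y.
  by field; rewrite !gt_eqF.
have h1 := Hd1 x hx1 hxF.
have h2 := Hd2 x hx2 hxF.
have ax0 : 0 <= (1 - F x) / f x by rewrite divr_ge0 // ltW.
have hu : xF - x = y^-1 by rewrite /x; ring.
rewrite hu in h2.
have h3 : 2 * ((1 - F x) / f x) * y <= e / 2.
  have := ler_wpM2r (ltW y0) h2.
  rewrite -[X in _ <= X]mulrA mulVf ?gt_eqF // mulr1 => h.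
  have -> : e / 2 = 2 * (e / 4) by field.
  rewrite -mulrA; apply: ler_wpM2l => //.
move: h1; set A := (1 - F x) * f' x / f x ^+ 2 => h1.
have h4 : 0 <= 2 * ((1 - F x) / f x) * y by apply: mulr_ge0; [apply: mulr_ge0| apply: ltW].
move: h1; rewrite !ltr_norml => /andP[h1a h1b].
apply/andP; split; lra.
Qed.

Lemma gumbel_cont_eps (R : realType) (x e : R) : 0 < e ->
  exists2 d, 0 < d & forall y, `|y - x| < d -> `|Gumbel y - Gumbel x| < e.
Proof.
move=> e0.
have cG : {for x, continuous (@Gumbel R)}.
  rewrite /Gumbel.
  apply: (continuous_comp (f := fun x => - expR (- x))); last exact: continuous_expR.
  apply: continuousN.
  apply: (continuous_comp (f := fun x => - x)); last exact: continuous_expR.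
  exact: continuousN.
have /cvgrPdist_lt/(_ e e0) := cG.
move=> /nbhs_ballP [d /= d0 Hd].
exists d => // y yx. rewrite distrC. apply: Hd. by rewrite /ball /= distrC.
Qed.

Lemma gumbel_lt1 (R : realType) (x : R) : Gumbel x < 1.
Proof. by rewrite /Gumbel expR_lt1 oppr_lt0 expR_gt0. Qed.

Lemma gumbel_gt0 (R : realType) (x : R) : 0 < Gumbel x.
Proof. exact: expR_gt0. Qed.

Lemma ev_lt (R : realType) (F : R -> R) (xF : R) (c d : nat -> R) (x : R) :
  (forall t, xF <= t -> F t = 1) ->
  (fun n => F (c n * x + d n) ^+ n) @ \oo --> Gumbel x ->
  exists N, forall n, (N <= n)%N -> c n * x + d n < xF.
Proof.
move=> F1 /seq_lim_eps H.
have e0 : 0 < 1 - Gumbel x by rewrite subr_gt0 gumbel_lt1.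
have [N HN] := H _ e0. exists N => n Nn.
rewrite ltNge; apply/negP => /F1 Fe.
have := HN n Nn. rewrite Fe expr1n.
have := gumbel_lt1 x. move=> h1 h2.
have : 1 - Gumbel x <= `|1 - Gumbel x| by apply: ler_norm.
lra.
Qed.

Lemma r_to0 (R : realType) (F : R -> R) (xF : R) (c d : nat -> R) :
  (forall t, xF <= t -> F t = 1) ->
  (forall n, 0 < c n) ->
  (forall x, (fun n => F (c n * x + d n) ^+ n) @ \oo --> Gumbel x) ->
  forall e, 0 < e -> exists N, forall n, (N <= n)%N ->
     0 < xF - d n /\ c n < e * (xF - d n).
Proof.
move=> F1 c0 H e e0.
have [N0 H0] := ev_lt F1 (H 0).
have [N1 H1] := ev_lt F1 (H e^-1).
exists (maxn N0 N1) => n Nn.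
have h0 := H0 n (leq_trans (leq_maxl _ _) Nn).
have h1 := H1 n (leq_trans (leq_maxr _ _) Nn).
rewrite mulr0 add0r in h0.
split; first by rewrite subr_gt0.
have : c n * e^-1 < xF - d n by lra.
by rewrite ltr_pdivrMr // mulrC.
Qed.

Lemma MDAY (R : realType) (F H : R -> R) (xF : R) :
  (forall t, 0 < t -> H t = F (xF - t^-1)) ->
  (forall x, 0 <= F x) ->
  (forall x y, x <= y -> F x <= F y) ->
  (forall t, xF <= t -> F t = 1) ->
  MDA_Gumbel F -> MDA_Gumbel H.
Proof.
move=> HH F0 Fmono F1 [c [d [c0 Hc]]].
exists (fun n => if 0 < xF - d n then c n / (xF - d n)^+2 else 1),
       (fun n => if 0 < xF - d n then (xF - d n)^-1 else 0).
split.
  by move=> n; case: ifP => // u0; rewrite divr_gt0 // exprn_gt0.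
move=> x; apply/seq_lim_eps => e e0.
have e2 : 0 < e / 2 by rewrite divr_gt0.
have [dl dl0 Hdl] := gumbel_cont_eps x e2.
have δ0 : 0 < dl / 2 by rewrite divr_gt0.
have Glo : `|Gumbel (x - dl / 2) - Gumbel x| < e / 2.
  apply: Hdl. rewrite addrAC subrr add0r normrN gtr0_norm //.
  rewrite ltr_pdivrMr // ltr_pMr //. lra.
have [N1 H1] := (seq_lim_eps _ _).1 (Hc (x - dl / 2)) _ e2.
have [N2 H2] := (seq_lim_eps _ _).1 (Hc x) _ e2.
have ax0 : 0 < 2 * (`|x| + 1) by rewrite mulr_gt0 // ltr_pwDr.
have xx0 : 0 < 2 * (x ^+ 2 + 1) by rewrite mulr_gt0 // ltr_pwDr // sqr_ge0.
set η := Num.min (2 * (`|x| + 1))^-1 (dl / 2 / (2 * (x ^+ 2 + 1))).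
have η0 : 0 < η by rewrite lt_min invr_gt0 ax0 divr_gt0.
have [N3 H3] := r_to0 F1 c0 Hc η0.
exists (maxn N1 (maxn N2 N3)) => n Nn.
have [u0 cu] := H3 n (leq_trans (leq_trans (leq_maxr _ _) (leq_maxr _ _)) Nn).
have h1 := H1 n (leq_trans (leq_maxl _ _) Nn).
have h2 := H2 n (leq_trans (leq_trans (leq_maxl _ _) (leq_maxr _ _)) Nn).
rewrite u0 /=.
have cn0 := c0 n.
move: cu h1 h2 u0 cn0.
move: (c n) (d n) => C D cu h1 h2 u0 cn0.
set r := C / (xF - D).
have r0 : 0 < r by rewrite divr_gt0.
have rη : r < η by rewrite ltr_pdivrMr.
have rη1 : r * (2 * (`|x| + 1)) < 1.
  have : η <= (2 * (`|x| + 1))^-1 by rewrite ge_min lexx.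
  move=> h; have hr : r < (2 * (`|x| + 1))^-1 by lra.
  by move: hr; rewrite -(ltr_pM2r ax0) mulVf ?gt_eqF.
have rη2 : r * (2 * (x ^+ 2 + 1)) < dl / 2.
  have : η <= dl / 2 / (2 * (x ^+ 2 + 1)) by rewrite ge_min lexx orbT.
  move=> h; have hr : r < dl / 2 / (2 * (x ^+ 2 + 1)) by lra.
  by move: hr; rewrite -(ltr_pM2r xx0) divfK ?gt_eqF.
have rx : - (r * `|x|) <= r * x.
  rewrite -mulrN; apply: ler_wpM2l; [exact: ltW | exact: (lerNnormlW (lexx _))].
have w0 : 1 / 2 < 1 + r * x.
  have : r * `|x| < 1 / 2.
    have : 0 <= r * 1 by rewrite mulr1 ltW.
    lra.
  lra.
have s0 : 0 < C / (xF - D) ^+ 2 * x + (xF - D)^-1.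
  have -> : C / (xF - D) ^+ 2 * x + (xF - D)^-1 = (1 + r * x) / (xF - D).
    by rewrite /r; field; rewrite gt_eqF.
  by rewrite divr_gt0 //; lra.
rewrite HH //.
have harg : xF - (C / (xF - D) ^+ 2 * x + (xF - D)^-1)^-1 = D + C * (x / (1 + r * x)).
  have e1 : xF - D + C * x = (xF - D) * (1 + r * x).
    by rewrite /r; field; rewrite gt_eqF.
  have e2' : 0 < xF - D + C * x by rewrite e1 mulr_gt0 //; lra.
  rewrite /r; field; rewrite !gt_eqF //.
rewrite harg.
set q := x / (1 + r * x).
have hq : q - x = - (r * x ^+ 2) / (1 + r * x).
  rewrite /q; field. lra.
have qx : q <= x.
  rewrite -subr_le0 hq mulNr oppr_le0; apply: divr_ge0; [apply: mulr_ge0; [exact: ltW | exact: sqr_ge0] | lra].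
have qlo : x - dl / 2 <= q.
  have : r * x ^+ 2 <= dl / 2 * (1 + r * x).
    have : r * x ^+ 2 <= r * (2 * (x ^+ 2 + 1)) / 2.
      have : 0 <= r * 1 by rewrite mulr1 ltW.
      have : 0 <= r * x ^+ 2 by rewrite mulr_ge0 ?sqr_ge0 ?ltW.
      lra.
    have : dl / 2 / 2 <= dl / 2 * (1 + r * x).
      rewrite ler_pM2l //; lra.
    lra.
  move=> h.
  have w0' : 0 < 1 + r * x by lra.
  have : r * x ^+ 2 / (1 + r * x) <= dl / 2 by rewrite ler_pdivrMr //.
  have : - (r * x ^+ 2) / (1 + r * x) = - (r * x ^+ 2 / (1 + r * x)) by rewrite mulNr.
  lra.
have Flo : F (D + C * (x - dl / 2)) ^+ n <= F (D + C * q) ^+ n.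
  apply: lerXn2r; rewrite ?nnegrE //. apply: Fmono. by rewrite lerD2l ler_wpM2l // ltW.
have Fhi : F (D + C * q) ^+ n <= F (C * x + D) ^+ n.
  apply: lerXn2r; rewrite ?nnegrE //. apply: Fmono. by rewrite addrC lerD2r ler_wpM2l // ltW.
rewrite [C * (x - dl / 2) + D]addrC in h1.
move: h1 h2 Glo; rewrite !ltr_norml => /andP[a1 a2] /andP[b1 b2] /andP[g1 g2].
apply/andP; split; lra.
Qed.

Lemma distFE d (T : measurableType d) (R : realType) (P : probability T R)
  (X : {RV P >-> R}) (x : R) : (distF X x)%:E = P (X @^-1` `]-oo, x]).
Proof. by rewrite /distF fineK // fin_num_measure. Qed.

Lemma distF_props d (T : measurableType d) (R : realType) (P : probability T R)
  (X : {RV P >-> R}) :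
  [/\ forall x, 0 <= distF X x, forall x, distF X x <= 1 &
      forall x y, x <= y -> distF X x <= distF X y].
Proof.
split.
- by move=> x; rewrite -lee_fin distFE.
- by move=> x; rewrite -lee_fin distFE; apply: probability_le1; apply: measurable_funPTI.
- move=> x y xy; rewrite -lee_fin !distFE.
  by apply: (cdf_nondecreasing X xy).
Qed.

Lemma distF_rc d (T : measurableType d) (R : realType) (P : probability T R)
  (X : {RV P >-> R}) (a : R) : distF X t @[t --> a^'+] --> distF X a.
Proof.
apply: fine_cvg; rewrite fineK ?fin_num_measure//; exact: cdf_right_continuous.
Qed.

Lemma distF_q d (T : measurableType d) (R : realType) (P : probability T R)
  (X : {RV P >-> R}) (t xF : R) : t < xF ->
  distF X t + fine (P (X @^-1` `[xF, +oo[)) <= 1.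
Proof.
move=> txF.
rewrite -lee_fin EFinD distFE fineK ?fin_num_measure //; last exact: measurable_funPTI.
rewrite -measureU //; [| exact: measurable_funPTI | exact: measurable_funPTI |].
  by apply: probability_le1; apply: measurableU; apply: measurable_funPTI.
rewrite -preimage_setI; apply/seteqP; split => w /= //.
rewrite !in_itv /= andbT => -[h1 h2]. lra.
Qed.

Lemma distY d (T : measurableType d) (R : realType) (P : probability T R)
  (X Y : {RV P >-> R}) (xF : R) :
  (forall w, Y w = (xF - X w)^-1) -> P (X @^-1` `[xF, +oo[) = 0 ->
  forall y, 0 < y -> distF Y y = distF X (xF - y^-1).
Proof.
move=> HY q0 y y0.
apply: EFin_inj; rewrite !distFE.
have -> : Y @^-1` `]-oo, y] = X @^-1` `]-oo, xF - y^-1] `|` X @^-1` `[xF, +oo[.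
  apply/seteqP; split => w /=; rewrite !in_itv /= HY.
  - move=> h. have [wl|wr] := ltP (X w) xF; [left|right]; last by [].
    have u0 : 0 < xF - X w by rewrite subr_gt0.
    move: h; rewrite -[y]invrK lef_pV2 ?posrE ?invr_gt0 // => h. lra.
  - case=> h.
    + have u0 : 0 < xF - X w.
        have : 0 < y^-1 by rewrite invr_gt0.
        lra.
      rewrite -[y]invrK lef_pV2 ?posrE ?invr_gt0 //. lra.
    + have : xF - X w <= 0 by lra.
      rewrite -invr_le0 => h'; apply: (le_trans h'); exact: ltW.
rewrite measureU //; [| exact: measurable_funPTI | exact: measurable_funPTI |].
  by rewrite [X in _ + X]q0 adde0.
rewrite -preimage_setI; apply/seteqP; split => w /= //.
rewrite !in_itv /= andbT => -[h1 h2].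
have : 0 < y^-1 by rewrite invr_gt0.
lra.
Qed.

Unset Implicit Arguments.

Theorem proposition3 (d : measure_display) (T : measurableType d) (R : realType)
  (P : probability T R) (X Y : {RV P >-> R}) (xF : R) :
  has_density X ->
  has_ubound (endpoint_set (distF X)) ->
  xF = sup (endpoint_set (distF X)) ->
  (exists z, z < xF /\ tail_regular `]z, xF[ (distF X)) ->
  MDA_Gumbel (distF X) ->
  (fun x => (1 - distF X x) * derive1 (derive1 (distF X)) x / (derive1 (distF X) x) ^+ 2)
    @ xF^'- --> (-1 : R) ->
  (forall w, Y w = (xF - X w)^-1) ->
  (exists zY : R, tail_regular `]zY, +oo[ (distF Y)) /\
  MDA_Gumbel (distF Y) /\
  ~ has_ubound (endpoint_set (distF Y)) /\
  (fun y => (1 - distF Y y) * derive1 (derive1 (distF Y)) y / (derive1 (distF Y) y) ^+ 2)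
    @ +oo --> (-1 : R).
Proof.
move=> _ Hub HxF [z [hz Hreg]] HMDA HA3 HY.
have [F0 F1' Fmono] := distF_props X.
have [c [dd [c0 Hc]]] := HMDA.
have G0 := gumbel_gt0 (0 : R).
have G1 := gumbel_lt1 (0 : R).
have eN : 0 < Num.min (Gumbel (0:R) / 2) (1 - Gumbel 0).
  by rewrite lt_min divr_gt0 // subr_gt0.
have [N HN] := (seq_lim_eps _ _).1 (Hc 0) _ eN.
have HN' : forall n, (N <= n)%N ->
    Gumbel (0:R) / 2 < distF X (dd n) ^+ n < 1.
  move=> n Nn; have := HN n Nn; rewrite mulr0 add0r ltr_norml => /andP[h1 h2].
  have m1 : Num.min (Gumbel (0:R) / 2) (1 - Gumbel 0) <= Gumbel 0 / 2 by rewrite ge_min lexx.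
  have m2 : Num.min (Gumbel (0:R) / 2) (1 - Gumbel 0) <= 1 - Gumbel 0 by rewrite ge_min lexx orbT.
  apply/andP; split; lra.
have Fdd : forall n, (N <= n)%N -> distF X (dd n) < 1.
  move=> n Nn; rewrite lt_neqAle F1' andbT; apply/eqP => h.
  by have := HN' n Nn; rewrite h expr1n => /andP[_]; rewrite ltxx.
have Hne : endpoint_set (distF X) !=set0 by exists (dd N); apply: Fdd.
have Hsup : has_sup (endpoint_set (distF X)) by split.
have Fle_xF : forall t, distF X t < 1 -> t <= xF.
  by move=> t ht; rewrite HxF; apply: sup_upper_bound.
have Flt : forall t, t < xF -> distF X t < 1.
  move=> t txF. rewrite HxF in txF. have [s Ss ts] := sup_gt Hne txF.
  exact: le_lt_trans (Fmono _ _ (ltW ts)) Ss.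
have F1gt : forall t, xF < t -> distF X t = 1.
  move=> t ht; apply/eqP; rewrite eq_le F1' /= leNgt; apply/negP => /Fle_xF; lra.
have F1 : forall t, xF <= t -> distF X t = 1.
  move=> t; rewrite le_eqVlt => /predU1P [<-|]; last exact: F1gt.
  have h1 := @distF_rc _ _ _ _ X xF.
  have h2 : distF X t @[t --> xF^'+] --> (1:R).
    apply: cvg_near_cst; near=> s; apply: F1gt; near: s; exact: nbhs_right_gt.
  exact: (cvg_unique _ h1 h2).
have Fsup : forall η, 0 < η -> exists2 s, s < xF & 1 - η < distF X s.
  move=> η η0.
  have [//|H] := pselect (exists2 s, s < xF & 1 - η < distF X s).
  have Hle : forall s, s < xF -> distF X s <= 1 - η.
    move=> s sx; rewrite leNgt; apply/negP => h; apply: H; by exists s.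
  have Fq : forall n, (N <= n)%N -> distF X (dd n) <= 1 - η.
    move=> n Nn; apply: Hle; rewrite ltNge; apply/negP => /F1 h.
    by have := Fdd n Nn; rewrite h ltxx.
  have q0 : 0 <= 1 - η by apply: le_trans (Fq N (leqnn N)).
  have q1 : `|1 - η| < 1 by rewrite ger0_norm //; lra.
  have [M HM] := (seq_lim_eps _ _).1 (cvg_expr q1) _ (divr_gt0 G0 (ltr0Sn R 1)).
  have n1 : (N <= maxn N M)%N by apply: leq_maxl.
  have n2 : (M <= maxn N M)%N by apply: leq_maxr.
  have := HM _ n2; rewrite subr0 ger0_norm ?exprn_ge0 // => hM.
  have := HN' _ n1 => /andP[hN _].
  have : distF X (dd (maxn N M)) ^+ maxn N M <= (1 - η) ^+ maxn N M.
    by apply: lerXn2r; rewrite ?nnegrE //; apply: Fq.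
  lra.
have q0 : P (X @^-1` `[xF, +oo[) = 0.
  have qfin : P (X @^-1` `[xF, +oo[) \is a fin_num.
    by apply: fin_num_measure; apply: measurable_funPTI.
  have qge0 : 0 <= fine (P (X @^-1` `[xF, +oo[)).
    by apply: fine_ge0; apply: measure_ge0.
  suff : fine (P (X @^-1` `[xF, +oo[)) = 0.
    by move=> h; rewrite -(fineK qfin) h.
  apply/eqP; rewrite eq_le qge0 andbT leNgt; apply/negP => hq.
  have [s sx hs] := Fsup _ hq.
  have := @distF_q _ _ _ _ X _ _ sx. lra.
have HH := distY HY q0.
split; first by exists ((xF - z)^-1); exact: (tailY hz HH Hreg).
split; first exact: (MDAY HH F0 Fmono F1 HMDA).
split; last exact: (A3Y hz HH Hreg Flt Fmono Fsup HA3).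
move=> [M HM].
set y := Num.max 1 (M + 1).
have y0 : 0 < y by rewrite lt_max ltr01.
have : endpoint_set (distF Y) y.
  rewrite /endpoint_set /= HH //; apply: Flt.
  by rewrite ltrBlDr ltrDl invr_gt0.
move=> /HM; rewrite ge_max => /andP[_]; lra.
Unshelve. all: by end_near.
Qed.
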